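(* Let $\mathcal{A}=\{m\ge 1:\ c_m=1\}$. A positive integer $n$ belongs to $\mathcal{A}$ if and only if, in the base-$4$ expansion of $n+1$, every digit other than the last (least significant) one is $0$ or $2$; equivalently, the binary digits of $n+1$ at positions $2k$ (i.e. with weight $2^{2k}$) are $0$ for all $k\ge 1$.
   Context: For $n\in\mathbb{N}$ let $s_2(n)$ be the sum of the binary digits of $n$ and $t_n=s_2(n)\bmod 2$ (the Prouhet–Thue–Morse sequence). Let $F(X)=\sum_{n\ge1}t_nX^n\in\mathbb{F}_2[[X]]$ and let $G(X)=\sum_{n\ge1}c_nX^n\in\mathbb{F}_2[[X]]$ be its compositional inverse, i.e. $F(G(X))=G(F(X))=X$. The $c_n$ are identified with integers in $\{0,1\}$. *)

(* Defs.v *)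
From HB Require Import structures.
From mathcomp Require Import all_boot all_order all_algebra.
Set Implicit Arguments. Unset Strict Implicit. Unset Printing Implicit Defensive.
Import GRing.Theory.
Local Open Scope ring_scope.

(* s_2(n): sum of the binary digits of n (digits i < n+1 cover all of n). *)
Definition s2 (n : nat) : nat := (\sum_(i < n.+1) ((n %/ 2 ^ i) %% 2))%N.

Definition tm (n : nat) : 'F_2 := ((s2 n) %% 2)%:R.

Definition Fcoef (n : nat) : 'F_2 := if n == 0%N then 0 else tm n.

(* Coefficient of X^N in the formal composition A(B(X)) of power series with
   coefficient sequences a, b (meaningful when b 0 = 0): only the terms
   a_k B^k, k <= N, and the coefficients of B of index <= N contribute. *)
Definition comp_coef (a b : nat -> 'F_2) (N : nat) : 'F_2 :=
  \sum_(k < N.+1) a k * (((\poly_(i < N.+1) b i) ^+ k)`_N).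

Definition Xcoef (N : nat) : 'F_2 := (N == 1%N)%:R.

(* Main.v *)
Require Import Defs.
From mathcomp Require Import all_boot all_order all_algebra.
From mathcomp Require Import zify ring.
Import GRing.Theory.
Set Implicit Arguments. Unset Strict Implicit.
Local Open Scope ring_scope.

Notation P2 := {poly 'F_2}.
Definition eqm (M : nat) (p q : P2) := 'X^M %| (p - q).

Lemma dvdXnP M (r : P2) : ('X^M %| r) <-> (forall i, (i < M)%N -> r`_i = 0).
Proof.
split.
  move/dvdpP=> [q ->] i hi; by rewrite coefMXn hi.
move=> h; rewrite -(poly_take_drop M r).
have -> : take_poly M r = 0.
  apply/polyP=> i; rewrite coef_take_poly coef0; case: ifP => // /h //.
by rewrite add0r dvdp_mull.
Qed.

Lemma eqmP M p q : eqm M p q <-> (forall i, (i < M)%N -> p`_i = q`_i).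
Proof.
rewrite /eqm; split.
  by move/dvdXnP=> h i hi; apply/eqP; rewrite -subr_eq0 -coefB h.
by move=> h; apply/dvdXnP=> i hi; rewrite coefB h // subrr.
Qed.

Lemma eqm_refl M p : eqm M p p.
Proof. by apply/eqmP. Qed.
Lemma eqm_sym M p q : eqm M p q -> eqm M q p.
Proof. by move/eqmP=> h; apply/eqmP=> i hi; rewrite h. Qed.
Lemma eqm_trans M p q r : eqm M p q -> eqm M q r -> eqm M p r.
Proof. by move/eqmP=> h1 /eqmP h2; apply/eqmP=> i hi; rewrite h1 ?h2. Qed.
Lemma eqmD M p q p' q' : eqm M p q -> eqm M p' q' -> eqm M (p + p') (q + q').
Proof. by move/eqmP=> h1 /eqmP h2; apply/eqmP=> i hi; rewrite !coefD h1 ?h2. Qed.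
Lemma eqmMl M p q r : eqm M p q -> eqm M (r * p) (r * q).
Proof. by rewrite /eqm -mulrBr => h; apply: dvdp_mull. Qed.
Lemma eqmM M p q p' q' : eqm M p q -> eqm M p' q' -> eqm M (p * p') (q * q').
Proof.
move=> h1 h2; apply: (@eqm_trans _ _ (p * q')); first exact: eqmMl.
by rewrite (mulrC p) (mulrC q); apply: eqmMl.
Qed.
Lemma eqmX M p q n : eqm M p q -> eqm M (p ^+ n) (q ^+ n).
Proof. move=> h; elim: n => [|n ih]; first exact: eqm_refl. by rewrite !exprS; apply: eqmM. Qed.
Lemma eqm_le M M' p q : (M' <= M)%N -> eqm M p q -> eqm M' p q.
Proof. by move=> le /eqmP h; apply/eqmP=> i hi; apply: h; apply: leq_trans le. Qed.

Lemma eqm_comp_l M p p' q : 'X %| q -> eqm M p p' -> eqm M (p \Po q) (p' \Po q).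
Proof.
move=> /dvdpP [s ->] /dvdpP [r hr].
rewrite /eqm -comp_polyB hr comp_polyM comp_Xn_poly exprMn.
by rewrite mulrA dvdp_mull.
Qed.

Lemma eqm_comp_r M p q q' : eqm M q q' -> eqm M (p \Po q) (p \Po q').
Proof.
rewrite /eqm !comp_polyE -sumrB => h.
apply/dvdXnP => j hj; rewrite coef_sum big1 // => i _.
rewrite -scalerBr subrXX coefZ.
by move/dvdXnP: (dvdp_mulr (\sum_(i0 < i) q ^+ (i.-1 - i0) * q' ^+ i0) h) => ->; rewrite ?mulr0.
Qed.

Lemma comp_coefE a b N : comp_coef a b N = ((\poly_(i < N.+1) a i) \Po (\poly_(i < N.+1) b i))`_N.
Proof.
rewrite /comp_coef [\poly_(i < _) a i]poly_def (raddf_sum (comp_poly _)) coef_sum; apply: eq_bigr => i _.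
by rewrite /= comp_polyZ comp_Xn_poly coefZ.
Qed.

Lemma eqm_poly M M' (a : nat -> 'F_2) : (M' <= M)%N -> eqm M' (\poly_(i < M) a i) (\poly_(i < M') a i).
Proof.
move=> le; apply/eqmP=> i hi; rewrite !coef_poly hi.
by rewrite (leq_trans hi le).
Qed.

Lemma dvdX_poly M (a : nat -> 'F_2) : a 0%N = 0 -> 'X %| \poly_(i < M) a i.
Proof.
move=> h; rewrite -(expr1 'X); apply/dvdXnP=> i; rewrite ltnS leqn0 => /eqP ->.
by rewrite coef_poly; case: ifP.
Qed.

Lemma comp_trunc M (a b : nat -> 'F_2) N : b 0%N = 0 -> (N < M)%N ->
  ((\poly_(i < M) a i) \Po (\poly_(i < M) b i))`_N = comp_coef a b N.
Proof.
move=> hb hN; rewrite comp_coefE.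
have h1 : eqm N.+1 ((\poly_(i < M) a i) \Po (\poly_(i < M) b i))
   ((\poly_(i < N.+1) a i) \Po (\poly_(i < M) b i)).
  by apply: eqm_comp_l; [exact: dvdX_poly | exact: eqm_poly].
have h2 : eqm N.+1 ((\poly_(i < N.+1) a i) \Po (\poly_(i < M) b i))
   ((\poly_(i < N.+1) a i) \Po (\poly_(i < N.+1) b i)).
  by apply: eqm_comp_r; exact: eqm_poly.
by move/eqmP: (eqm_trans h1 h2) => ->.
Qed.

Lemma digit_zero n i : (n < i)%N -> ((n %/ 2 ^ i) %% 2 = 0)%N.
Proof.
move=> h; rewrite divn_small //; apply: leq_trans (ltn_expl n (isT : (1 < 2)%N)) _.
by rewrite leq_exp2l // ltnW.
Qed.

Lemma s2_ext n d : s2 n = (\sum_(i < n.+1 + d) ((n %/ 2 ^ i) %% 2))%N.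
Proof.
elim: d => [|d ih]; first by rewrite addn0.
by rewrite addnS big_ord_recr /= -ih digit_zero ?addn0 //; lia.
Qed.

Lemma s2_double m b : (b < 2)%N -> s2 (m.*2 + b) = (b + s2 m)%N.
Proof.
move=> hb; rewrite (s2_ext _ 1) addn1 big_ord_recl /=.
have e0 : ((m.*2 + b) %/ 2 ^ 0 %% 2)%N = b.
  by rewrite expn0 divn1 -muln2 modnMDl modn_small.
rewrite e0; congr (_ + _)%N.
rewrite (s2_ext m (m + b)).
have -> : (m.+1 + (m + b) = (m.*2 + b).+1)%N by rewrite -addnn; lia.
apply: eq_bigr => i _; rewrite /bump /= add1n expnS divnMA.
congr ((_ %/ _) %% 2)%N.
by rewrite -muln2 divnMDl // divn_small // addn0.
Qed.

Lemma natF2 (n : nat) : ((n %% 2)%:R : 'F_2) = n%:R.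
Proof. by rewrite Fp_nat_mod. Qed.

Lemma two0 : (2%:R : 'F_2) = 0. Proof. by rewrite -natF2 modnn. Qed.

Lemma tm_even m : tm m.*2 = tm m.
Proof. by rewrite /tm -(addn0 m.*2) s2_double. Qed.
Lemma tm_odd m : tm m.*2.+1 = tm m + 1.
Proof. by rewrite /tm -[m.*2.+1]addn1 s2_double // !natF2 natrD addrC. Qed.

Lemma F_even m : Fcoef m.*2 = Fcoef m.
Proof. by rewrite /Fcoef double_eq0; case: eqP => // _; rewrite tm_even. Qed.
Lemma F_odd m : Fcoef m.*2.+1 = Fcoef m + 1.
Proof.
rewrite /Fcoef /= tm_odd; case: eqP => // ->.
by rewrite /tm /s2 big_ord1 div0n mod0n.
Qed.

Lemma twoP : (2%:R : P2) = 0.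
Proof. by rewrite -polyC_natr two0. Qed.

Lemma sqF2 (c : 'F_2) : c * c = c.
Proof. case: c => [[|[|m]] hm]; try by apply/val_inj. Qed.

Lemma frob (p : P2) : p ^+ 2 = p \Po 'X^2.
Proof.
elim/poly_ind: p => [|p c ih]; first by rewrite expr2 mul0r comp_poly0.
rewrite comp_polyD comp_polyM comp_polyX comp_polyC -ih.
have -> : (p * 'X + c%:P) ^+ 2 = p ^+ 2 * 'X^2 + (c * c)%:P + 2%:R * (p * 'X * c%:P).
  by rewrite polyCM; ring.
by rewrite twoP mul0r addr0 sqF2.
Qed.

Lemma dv2e m : (2 %| m.*2)%N. Proof. by rewrite dvdn2 odd_double. Qed.
Lemma dv2o m : (2 %| m.*2.+1)%N = false. Proof. by rewrite dvdn2 /= odd_double. Qed.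
Lemma div2e m : (m.*2 %/ 2 = m)%N. Proof. by rewrite -muln2 mulnK. Qed.

Lemma eo_split i : (exists m, i = m.*2) \/ (exists m, i = m.*2.+1).
Proof.
case: (boolP (odd i)) => h; [right|left]; exists i./2;
  by rewrite -[LHS](odd_double_half i) ?h ?(negbTE h) /= ?add0n ?add1n.
Qed.

Definition fpoly M := \poly_(i < M) Fcoef i.

Lemma fc M k : (k < M)%N -> (fpoly M)`_k = Fcoef k.
Proof. by rewrite coef_poly => ->. Qed.

Lemma TM_eq M : eqm M ((1 + 'X^2) * fpoly M)
   ((1 + 'X + 'X^2 + 'X^3) * (fpoly M \Po 'X^2) + 'X).
Proof.
apply/eqmP => i hi.
rewrite !mulrDl !mul1r !coefD !coefXnM coefXM coefX !coef_comp_poly_Xn //.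
case: i hi => [|[|i]] hi.
- rewrite !fc //= /Fcoef /=. by rewrite !addr0.
- have F1 : Fcoef 1 = Fcoef 0 + 1 by exact: (F_odd 0).
  rewrite !fc /=; try (rewrite -?muln2; lia).
  by rewrite F1 (_ : (1 - 2 = 0)%N) // /Fcoef /= !add0r !addr0.
have [[m ?]|[m ?]] := eo_split i; subst i.
- case: m hi => [|m] hi.
    rewrite !fc /=; try (rewrite -?muln2; lia).
    rewrite (_ : (0.*2.+2 %/ 2 = 1)%N) //.
    have E2 : Fcoef 0.*2.+2 = Fcoef 1 := F_even 1.
    rewrite E2.
    by rewrite !addr0.
  have e1 : (m.+1.*2.+2 < 2)%N = false by rewrite -?muln2; lia.
  have e2 : (m.+1.*2.+2 < 3)%N = false by rewrite -?muln2; lia.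
  have e3 : (m.+1.*2.+2 - 2 = m.+1.*2)%N by rewrite -?muln2; lia.
  have e4 : (m.+1.*2.+2 - 3 = m.*2.+1)%N by rewrite -?muln2; lia.
  rewrite e1 e2 e3 e4 /= -!doubleS !dv2e !dv2o !div2e !fc; try (rewrite -?muln2; lia).
  by rewrite !F_even !addr0.
- have e1 : (m.*2.+3 < 2)%N = false by rewrite -?muln2; lia.
  have e2 : (m.*2.+3 < 3)%N = false by rewrite -?muln2; lia.
  have e3 : (m.*2.+3 - 2 = m.*2.+1)%N by rewrite -?muln2; lia.
  have e4 : (m.*2.+3 - 3 = m.*2)%N by rewrite -?muln2; lia.
  rewrite e1 e2 e3 e4 /= -!doubleS !dv2e !dv2o !div2e !fc; try (rewrite -?muln2; lia).
  rewrite !F_odd !add0r !addr0.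
  have -> : Fcoef m.+1 + 1 + (Fcoef m + 1) = Fcoef m.+1 + Fcoef m + 2%:R by ring.
  by rewrite two0 addr0.
Qed.

Lemma TM_cubic M : eqm M ((1 + fpoly M + 'X * fpoly M) ^+ 3) (1 + fpoly M).
Proof.
have h := TM_eq M; rewrite -frob in h.
rewrite /eqm in h *.
set f := fpoly M in h *.
have -> : (1 + f + 'X * f) ^+ 3 - (1 + f) = f * ((1 + 'X ^+ 2) * f - ((1 + 'X + 'X ^+ 2 + 'X ^+ 3) * f ^+ 2 + 'X))
   + 2%:R * (f + 2%:R * 'X * f + (1 + 3%:R * 'X + 'X ^+ 2) * f ^+ 2 + (1 + 2%:R * 'X + 2%:R * 'X ^+ 2 + 'X ^+ 3) * f ^+ 3).
  by ring.
by rewrite twoP mul0r addr0 dvdp_mull.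
Qed.

Lemma coprimeXn M (u : P2) : u`_0 != 0 -> coprimep ('X^M) u.
Proof.
move=> h; apply: coprimep_expl; rewrite coprimep_sym.
have := coprimep_XsubC u 0; rewrite polyC0 subr0 => ->.
by rewrite /root horner_coef0.
Qed.

Lemma eqm_cancel M (u p q : P2) : u`_0 != 0 -> eqm M (p * u) (q * u) -> eqm M p q.
Proof. by move=> hu; rewrite /eqm -mulrBl Gauss_dvdpl // coprimeXn. Qed.

Lemma cube_unique M (V W : P2) : V`_0 = 1 -> W`_0 = 1 ->
  eqm M (V ^+ 3) (1 + 'X) -> eqm M (W ^+ 3) (1 + 'X) -> eqm M V W.
Proof.
move=> hV hW h1 h2.
have h := eqm_trans h1 (eqm_sym h2).
apply: (@eqm_cancel _ (V ^+ 2 + V * W + W ^+ 2)).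
  rewrite !coefD coef0M !expr2 !coef0M hV hW !mulr1.
  by [].
rewrite /eqm in h *.
by have <- : V ^+ 3 - W ^+ 3 = V * (V ^+ 2 + V * W + W ^+ 2) - W * (V ^+ 2 + V * W + W ^+ 2) by ring.
Qed.

Definition gpoly (c : nat -> 'F_2) M := \poly_(i < M) c i.

Lemma G_cubic (c : nat -> 'F_2) (hc0 : c 0%N = 0)
  (hFG : forall N, comp_coef Fcoef c N = Xcoef N) M :
  eqm M ((1 + 'X + 'X * gpoly c M) ^+ 3) (1 + 'X).
Proof.
set g := gpoly c M.
have hg : 'X %| g by exact: dvdX_poly.
have h1 : eqm M (fpoly M \Po g) 'X.
  apply/eqmP => N hN; rewrite comp_trunc // hFG /Xcoef coefX //.
have h2 := eqm_comp_l hg (TM_cubic M).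
rewrite (rmorphXn (comp_poly g)) /= !comp_polyD comp_polyM comp_polyX in h2.
rewrite (comp_poly_multiplicative g).2 in h2.
set y := fpoly M \Po g in h1 h2.
have h3 : eqm M ((1 + y + g * y) ^+ 3) ((1 + 'X + 'X * g) ^+ 3).
  apply: eqmX; rewrite (mulrC 'X); apply: eqmD; [apply: eqmD|apply: eqmM] => //; exact: eqm_refl.
apply: eqm_trans (eqm_sym h3) _; apply: eqm_trans h2 _.
apply: eqmD (eqm_refl _ _) h1.
Qed.

Definition okd (m : nat) : bool := ((m %% 4 == 0) || (m %% 4 == 2))%N.
Definition Eb (m : nat) : bool := [forall k : 'I_m.+1, (0 < k)%N ==> okd (m %/ 4 ^ k)].
Definition Dgb (m : nat) : bool := [forall k : 'I_m.+1, okd (m %/ 4 ^ k)].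

Lemma big_digit m k : (m < k)%N -> (m %/ 4 ^ k = 0)%N.
Proof.
move=> h; rewrite divn_small //; apply: leq_trans (ltn_expl m (isT : (1 < 4)%N)) _.
by rewrite leq_exp2l // ltnW.
Qed.

Lemma EbP m : reflect (forall k, (0 < k)%N -> okd (m %/ 4 ^ k)) (Eb m).
Proof.
apply: (iffP forallP) => h k.
  move=> hk; case: (ltnP m k) => hmk; first by rewrite big_digit.
  by have := h (Ordinal (hmk : (k < m.+1)%N)); rewrite /= hk.
by apply/implyP; apply: h.
Qed.

Lemma DgbP m : reflect (forall k, okd (m %/ 4 ^ k)) (Dgb m).
Proof.
apply: (iffP forallP) => h k //.
case: (ltnP m k) => hmk; first by rewrite big_digit.
exact: (h (Ordinal (hmk : (k < m.+1)%N))).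
Qed.

Lemma div4S m k : (m %/ 4 ^ k.+1 = m %/ 4 %/ 4 ^ k)%N.
Proof. by rewrite expnS divnMA. Qed.

Lemma Eb_Dgb m : Eb m = Dgb (m %/ 4).
Proof.
apply/EbP/DgbP => h k.
  by rewrite -div4S; apply: h.
by case: k => // k _; rewrite div4S.
Qed.

Lemma Dgb_Eb q : Dgb q = okd q && Eb q.
Proof.
apply/DgbP/andP.
  move=> h; split; first by have := h 0%N; rewrite expn0 divn1.
  by apply/EbP => k _.
move=> [h1 /EbP h2] [|k]; first by rewrite expn0 divn1.
exact: h2.
Qed.

Lemma Eb0 : Eb 0.
Proof. by apply/EbP => k _; rewrite div0n. Qed.

Lemma h1 a r : (r < 4)%N -> ((a * 4 + r) %/ 4 = a)%N.
Proof. by move=> hr; rewrite divnMDl // divn_small // addn0. Qed.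
Lemma h2 a r : (r < 4)%N -> ((a * 4 + r) %% 4 = r)%N.
Proof. by move=> hr; rewrite modnMDl modn_small. Qed.

Lemma Eb_rec j : (if 4 %| j.+1 then Eb (j.+1 %/ 4) else false)%N = Eb j.+1 (+) Eb j.
Proof.
move: (divn_eq j 4) (ltn_mod j 4); move: (j %/ 4)%N (j %% 4)%N => a r -> hr.
case: r hr => [|[|[|[|r]]]] hr //.
- by rewrite -addnS /dvdn h2 //= !Eb_Dgb !h1 // addbb.
- by rewrite -addnS /dvdn h2 //= !Eb_Dgb !h1 // addbb.
- by rewrite -addnS /dvdn h2 //= !Eb_Dgb !h1 // addbb.
have e : ((a * 4 + 3).+1 = a.+1 * 4 + 0)%N by lia.
rewrite e /dvdn h2 //= h1 // (Eb_Dgb (a.+1 * 4 + 0)) (Eb_Dgb (a * 4 + 3)) !h1 // !Dgb_Eb.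
move: (divn_eq a 4) (ltn_mod a 4); move: (a %/ 4)%N (a %% 4)%N => b s -> hs.
case: s hs => [|[|[|[|s]]]] hs //.
- by rewrite -addnS !Eb_Dgb !h1 // /okd !h2 //=; case: (Dgb b).
- by rewrite -addnS /okd !h2 //= ?andbF ?addbF.
- by rewrite -addnS !Eb_Dgb !h1 // /okd !h2 //=; case: (Dgb b).
have e' : ((b * 4 + 3).+1 = b.+1 * 4 + 0)%N by lia.
by rewrite e' /okd !h2 //= ?andbF ?addbF.
Qed.

Definition ecoef (m : nat) : 'F_2 := (Eb m)%:R.
Definition wpoly M := \poly_(i < M) ecoef i.

Lemma addb_F2 (x y : bool) : (x%:R + y%:R : 'F_2) = (x (+) y)%:R.
Proof. case: x; case: y; rewrite ?addr0 ?add0r //. by rewrite -mulr2n two0. Qed.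


Lemma W4 M : eqm M ((wpoly M) ^+ 4) ((1 + 'X) * wpoly M).
Proof.
have -> : (wpoly M) ^+ 4 = wpoly M \Po 'X^4.
  rewrite (exprM _ 2 2) (frob (wpoly M)) (frob (wpoly M \Po 'X^2)) -comp_polyA comp_Xn_poly -exprM.
  done.
apply/eqmP => i hi.
rewrite coef_comp_poly_Xn // mulrDl mul1r coefD coefXM.
case: i hi => [|j] hi.
  by rewrite dvdn0 div0n addr0.
rewrite /= !coef_poly hi (ltnW hi).
have -> : (if (4 %| j.+1)%N then (if (j.+1 %/ 4 < M)%N then ecoef (j.+1 %/ 4) else 0) else 0)
   = (if (4 %| j.+1)%N then Eb (j.+1 %/ 4) else false)%:R.
  case: ifP => // _; rewrite ifT //; apply: leq_ltn_trans hi; exact: leq_div.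
by rewrite Eb_rec /ecoef addb_F2.
Qed.

Lemma W3 M : eqm M ((wpoly M) ^+ 3) (1 + 'X).
Proof.
case: M => [|M]; first by apply/eqmP.
apply: (@eqm_cancel _ (wpoly M.+1)).
  by rewrite coef_poly /= /ecoef Eb0.
by rewrite -exprSr; apply: W4.
Qed.


Theorem mainTheorem4 (c : nat -> 'F_2)
  (hc0 : c 0%N = 0)
  (hFG : forall N, comp_coef Fcoef c N = Xcoef N)
  (hGF : forall N, comp_coef c Fcoef N = Xcoef N) :
  forall n : nat, (0 < n)%N ->
    (c n = 1 <->
     (forall k : nat, (0 < k)%N ->
        ((n.+1 %/ 4 ^ k) %% 4 == 0)%N || ((n.+1 %/ 4 ^ k) %% 4 == 2)%N)).
Proof.
move=> n hn.
have hV0 : (1 + 'X + 'X * gpoly c n.+2)`_0 = 1.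
  by rewrite !coefD coefXM coef1 coefX /= addr0 addr0.
have hW0 : (wpoly n.+2)`_0 = 1 by rewrite coef_poly /= /ecoef Eb0.
have h := cube_unique hV0 hW0 (G_cubic hc0 hFG n.+2) (W3 n.+2).
move/eqmP: h => /(_ n.+1 (ltnSn _)).
rewrite !coefD coefXM coef1 coefX /= !coef_poly ltnSn (ltnW (ltnSn _)).
have -> : (n.+1 == 1%N) = false by rewrite eqSS; case: (n) hn.
rewrite add0r add0r /ecoef => ->.
split.
  by case: (EbP n.+1) => // _ /eqP; rewrite oner_eq0.
by move=> hk; have -> : Eb n.+1 by apply/EbP.
Qed.
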